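(* Let $(\mathscr{S},\mathscr{C},\mathscr{R},K)$ be a PL-RDK system containing an irreversible inflow reaction $0\to A$ (so $A\to 0\notin\mathscr{R}$). Let $\mathcal{D}$ be the set of all reactions other than $0\to A$ in which $A$ occurs in the reactant or the product complex. If for every $y\to y'\in\mathcal{D}$ the $A$-coordinate of the reaction vector $y'-y$ is zero, then the system does not have the capacity to admit multiple equilibria.
   Context: In a PL-RDK system each reaction $y\to y'$ has rate $k_{y\to y'}x^{T_{.y}}$ with $k_{y\to y'}>0$ and a real kinetic order vector $T_{.y}$ depending only on the reactant complex $y$; the dynamics is $dx/dt=\sum_{\mathscr{R}}k_{y\to y'}x^{T_{.y}}(y'-y)$. The stoichiometric subspace is $S=\mathrm{span}\{y'-y\}$. The system has the capacity to admit multiple equilibria if there exist positive rate constants for which there are two distinct positive equilibria $c^*,c^{**}$ with $c^*-c^{**}\in S$. Here $0$ denotes the zero complex and $A$ the complex consisting of one unit of species $A$. *)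

(* Defs.v *)
From mathcomp Require Import all_boot.
From Stdlib Require Import Reals.
Set Implicit Arguments. Unset Strict Implicit. Unset Printing Implicit Defensive.

Definition cplx (n : nat) := {ffun 'I_n -> nat}.
Definition reaction (n : nat) := (cplx n * cplx n)%type.

Definition zero_cplx (n : nat) : cplx n := [ffun _ => 0%N].
Definition unit_cplx (n : nat) (a : 'I_n) : cplx n := [ffun i => nat_of_bool (i == a)].

Definition is_network (n : nat) (rs : seq (reaction n)) : Prop :=
  uniq rs /\ (forall r, r \in rs -> r.1 != r.2).

Definition plmon (n : nat) (x : 'I_n -> R) (t : 'I_n -> R) : R :=
  \big[Rmult/1%R]_(i < n) Rpower (x i) (t i).

(* PL-RDK vector field: kinetic orders T : cplx n -> 'I_n -> R depend only on
   the reactant complex; k are the rate constants. *)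
Definition plrdk_field (n : nat) (rs : seq (reaction n)) (T : cplx n -> 'I_n -> R)
  (k : reaction n -> R) (x : 'I_n -> R) (i : 'I_n) : R :=
  \big[Rplus/0%R]_(r <- rs)
     (k r * plmon x (T r.1) * (INR (r.2 i) - INR (r.1 i)))%R.

Definition positive_equilibrium (n : nat) (rs : seq (reaction n))
  (T : cplx n -> 'I_n -> R) (k : reaction n -> R) (c : 'I_n -> R) : Prop :=
  (forall i, 0 < c i)%R /\ (forall i, plrdk_field rs T k c i = 0%R).

Definition in_stoich_subspace (n : nat) (rs : seq (reaction n)) (v : 'I_n -> R) : Prop :=
  exists coef : reaction n -> R,
    forall i, v i = \big[Rplus/0%R]_(r <- rs) (coef r * (INR (r.2 i) - INR (r.1 i)))%R.

Definition has_capacity_multiple_equilibria (n : nat) (rs : seq (reaction n))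
  (T : cplx n -> 'I_n -> R) : Prop :=
  exists k : reaction n -> R,
    (forall r, r \in rs -> 0 < k r)%R /\
    exists c1 c2 : 'I_n -> R,
      positive_equilibrium rs T k c1 /\ positive_equilibrium rs T k c2 /\
      (exists i, c1 i <> c2 i) /\
      in_stoich_subspace rs (fun i => c1 i - c2 i)%R.

(* Main.v *)
Require Import Defs.
From mathcomp Require Import all_boot.
From Stdlib Require Import Reals Lra.

Lemma sum_single (A : eqType) (s : seq A) (r0 : A) (F : A -> R) :
  uniq s -> (forall r, r \in s -> r != r0 -> F r = 0%R) ->
  \big[Rplus/0%R]_(r <- s) F r = if r0 \in s then F r0 else 0%R.
Proof.
elim: s => [|x s IH] /=; first by rewrite big_nil.
move=> /andP[xs us] H; rewrite big_cons in_cons IH //; last first.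
  by move=> r rs; apply: H; rewrite in_cons rs orbT.
case: (eqVneq r0 x) => [e|ne] /=.
  by rewrite e (negbTE xs); lra.
rewrite H ?in_cons ?eqxx // 1?eq_sym //; lra.
Qed.

Lemma plmon_pos (n : nat) (x t : 'I_n -> R) : (0 < plmon x t)%R.
Proof.
rewrite /plmon; elim/big_ind: _ => //; first lra.
- by move=> u v; apply: Rmult_lt_0_compat.
- by move=> i _; rewrite /Rpower; apply: exp_pos.
Qed.

Theorem propositionE1 (n : nat) (rs : seq (reaction n))
  (T : cplx n -> 'I_n -> R) (a : 'I_n) :
  is_network rs ->
  (zero_cplx n, unit_cplx a) \in rs ->
  (unit_cplx a, zero_cplx n) \notin rs ->
  (forall r, r \in rs -> r != (zero_cplx n, unit_cplx a) ->
     (0 < r.1 a)%N || (0 < r.2 a)%N -> r.2 a = r.1 a) ->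
  ~ has_capacity_multiple_equilibria rs T.
Proof.
move=> [urs _] r0in _ HD [k [kpos [c1 [c2 [[_ eq1] _]]]]].
have := eq1 a; rewrite /plrdk_field.
rewrite (@sum_single _ _ (zero_cplx n, unit_cplx a)) // ?r0in.
  rewrite /= !ffunE eqxx /=.
  have := kpos _ r0in; have := @plmon_pos _ c1 (T (zero_cplx n)).
  move=> h1 h2 h3. have : (0 < k (zero_cplx n, unit_cplx a) * plmon c1 (T (zero_cplx n)))%R.
    by apply: Rmult_lt_0_compat.
  rewrite /= in h3. lra.
move=> r rin rne.
have -> : r.2 a = r.1 a.
  case: (boolP ((0 < r.1 a)%N || (0 < r.2 a)%N)) => [h|]; first by apply: HD.
  by rewrite negb_or -!eqn0Ngt => /andP[/eqP -> /eqP ->].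
rewrite Rminus_diag; lra.
Qed.
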